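(* In the setting of the context, $A$ and $B$ are separable $k$-algebras.
   Context: $k$ is a field; $C_R(S)=\{r\in R:rs=sr\ \forall s\in S\}$. $N\subseteq M$ is a strongly separable, irreducible extension of $k$-algebras: $C_M(N)=k1$ and there are an $N$-bimodule map $E:M\to N$ and $x_1,\dots,x_n,y_1,\dots,y_n\in M$ with $\sum_iE(mx_i)y_i=m=\sum_ix_iE(y_im)$ for all $m\in M$, $E(1)\neq0$, $\sum_ix_iy_i\neq0$; normalized so that $E(1)=1$, whence $\sum_ix_iy_i=\lambda^{-1}1$ with $0\neq\lambda\in k$. Basic construction: given $S\subseteq R$, an $S$-bimodule map $E_S:R\to S$ with $E_S(1)=1$ and $r_i,s_i\in R$ with $\sum_iE_S(rr_i)s_i=r=\sum_ir_iE_S(s_ir)$ and $\sum_ir_is_i=\lambda^{-1}1$, set $R_1=R\otimes_SR$ with product $(a\otimes b)(c\otimes d)=aE_S(bc)\otimes d$, unit $\sum_ir_i\otimes s_i$, $R\subseteq R_1$ via $r\mapsto\sum_irr_i\otimes s_i$, $e=1\otimes1$, $E_R:R_1\to R$, $a\otimes b\mapsto\lambda ab$; then $E_R$, $\lambda^{-1}r_i\otimes1$, $1\otimes s_i$ satisfy the same conditions with the same $\lambda$. From $(N\subseteq M,E)$ get $M_1,e_1,E_M$; from $(M\subseteq M_1,E_M)$ get $M_2,e_2,E_{M_1}$. Let $A=C_{M_1}(N)$, $B=C_{M_2}(M)$. Depth 2 is assumed: $M_1$ is free as right $M$-module with basis in $A$, $M_2$ free as right $M_1$-module with basis in $B$.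 A $k$-algebra $D$ is separable if the multiplication $D\otimes_kD\to D$ has a right inverse as a $D$-$D$-bimodule map. *)

(* Defs.v *)
From HB Require Import structures.
From mathcomp Require Import all_boot all_order all_algebra.
Set Implicit Arguments. Unset Strict Implicit. Unset Printing Implicit Defensive.
Import GRing.Theory.
Local Open Scope ring_scope.

Definition scalars (k : fieldType) (R : algType k) : R -> Prop :=
  fun s => exists c : k, s = c%:A.

Definition centralizer (R : ringType) (S : R -> Prop) : R -> Prop :=
  fun r => forall s, S s -> r * s = s * r.

Definition balanced_biadd (R : ringType) (D S : R -> Prop) (V : zmodType)
    (f : R -> R -> V) : Prop :=
  [/\ forall a a' b, D a -> D a' -> D b -> f (a + a') b = f a b + f a' b,
      forall a b b', D a -> D b -> D b' -> f a (b + b') = f a b + f a b' &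
      forall a s b, D a -> S s -> D b -> f (a * s) b = f a (s * b)].

(* (T, t) is a tensor product D (x)_S D (D a right and left S-module inside R),
   defined by its universal property as an abelian group. *)
Definition is_tensor (R : ringType) (D S : R -> Prop) (T : zmodType)
    (t : R -> R -> T) : Prop :=
  balanced_biadd D S t /\
  forall (V : zmodType) (f : R -> R -> V), balanced_biadd D S f ->
    exists g : T -> V,
      [/\ forall u v, g (u + v) = g u + g v,
          forall a b, D a -> D b -> g (t a b) = f a b &
          forall g' : T -> V, (forall u v, g' (u + v) = g' u + g' v) ->
            (forall a b, D a -> D b -> g' (t a b) = f a b) -> g' =1 g].

(* D (a k-subalgebra of R) is a separable k-algebra: for a (any) tensor product
   (T, t) = D (x)_k D, the multiplication map mu : T -> D, t a b |-> a b, has a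
   right inverse sigma which is a D-D-bimodule map.  The bimodule actions on T
   are the (unique) additive maps with  t x y |-> t (a x) y  resp.
   t x y |-> t x (y a). *)
Definition separable_sub (k : fieldType) (R : algType k) (D : R -> Prop) : Prop :=
  forall (T : zmodType) (t : R -> R -> T), is_tensor D (@scalars k R) t ->
  exists sigma : R -> T,
    [/\ forall d d', D d -> D d' -> sigma (d + d') = sigma d + sigma d',
        forall a d (L : T -> T), D a -> D d ->
          (forall u v, L (u + v) = L u + L v) ->
          (forall x y, D x -> D y -> L (t x y) = t (a * x) y) ->
          L (sigma d) = sigma (a * d),
        forall a d (L : T -> T), D a -> D d ->
          (forall u v, L (u + v) = L u + L v) ->
          (forall x y, D x -> D y -> L (t x y) = t x (y * a)) ->
          L (sigma d) = sigma (d * a) &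
        forall mu : T -> R, (forall u v, mu (u + v) = mu u + mu v) ->
          (forall x y, D x -> D y -> mu (t x y) = x * y) ->
          forall d, D d -> mu (sigma d) = d].

(* Inclusion R -> R (x)_S R of the basic construction: r |-> sum_i r r_i (x) s_i. *)
Definition bc_incl (R : ringType) (T : zmodType) (t : R -> R -> T) (n : nat)
    (r_ s_ : 'I_n -> R) (r : R) : T :=
  \sum_(i < n) t (r * r_ i) (s_ i).

Definition free_right_basis_in (R' Z : ringType) (j : R' -> Z) (P : Z -> Prop) : Prop :=
  exists (m : nat) (b : 'I_m -> Z),
    [/\ forall l, P (b l),
        forall z, exists c : 'I_m -> R', z = \sum_(l < m) b l * j (c l) &
        forall c : 'I_m -> R', \sum_(l < m) b l * j (c l) = 0 -> forall l, c l = 0].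

(* Main.v *)
Require Import Defs.
From HB Require Import structures.
From mathcomp Require Import all_boot all_order all_algebra.
From Stdlib Require Import ClassicalEpsilon IndefiniteDescription.
Set Implicit Arguments. Unset Strict Implicit. Unset Printing Implicit Defensive.
Import GRing.Theory.
Local Open Scope ring_scope.


Section Helpers.
Variables (V W : zmodType) (f : V -> W).
Hypothesis Hf : forall u v, f (u + v) = f u + f v.
Lemma add0f : f 0 = 0.
Proof. by apply: (addrI (f 0)); rewrite -Hf !addr0. Qed.
Lemma addNf a : f (- a) = - f a.
Proof. by apply/eqP; rewrite -addr_eq0 -Hf addNr add0f. Qed.
Lemma addBf a b : f (a - b) = f a - f b.
Proof. by rewrite Hf addNf. Qed.
Lemma sumf (I : Type) (r : seq I) (P : pred I) (F : I -> V) :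
  f (\sum_(i <- r | P i) F i) = \sum_(i <- r | P i) f (F i).
Proof. exact: (big_morph f Hf add0f). Qed.
End Helpers.

Lemma sum_dom (R : ringType) (D : R -> Prop) (V : zmodType) (f : R -> V)
  (D0 : D 0) (DD : forall a b, D a -> D b -> D (a + b))
  (Hf : forall a b, D a -> D b -> f (a + b) = f a + f b)
  (I : Type) (r : seq I) (P : pred I) (F : I -> R) :
  (forall i, D (F i)) ->
  f (\sum_(i <- r | P i) F i) = \sum_(i <- r | P i) f (F i).
Proof.
move=> HF.
have f0 : f 0 = 0 by apply: (addrI (f 0)); rewrite -Hf // !addr0.
have : D (\sum_(i <- r | P i) F i) /\ f (\sum_(i <- r | P i) F i) = \sum_(i <- r | P i) f (F i).
  apply: (big_ind2 (fun a v => D a /\ f a = v)) => //.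
  by move=> a1 v1 a2 v2 [Ha1 <-] [Ha2 <-]; split; [exact: DD | exact: Hf].
by case.
Qed.

Lemma tensor_ext (R : ringType) (D S : R -> Prop) (T : zmodType)
    (t : R -> R -> T) (V : zmodType) (g1 g2 : T -> V) :
  is_tensor D S t ->
  (forall u v, g1 (u + v) = g1 u + g1 v) ->
  (forall u v, g2 (u + v) = g2 u + g2 v) ->
  (forall a b, D a -> D b -> g1 (t a b) = g2 (t a b)) -> g1 =1 g2.
Proof.
move=> [[h1 h2 h3] HU] H1 H2 Hg.
have Hb : balanced_biadd D S (fun a b => g2 (t a b)).
  split.
  - by move=> a a' b Da Da' Db; rewrite h1 // H2.
  - by move=> a b b' Da Db Db'; rewrite h2 // H2.
  - by move=> a s b Da Ss Db; rewrite h3.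
have [g [_ _ Hu]] := HU V _ Hb.
move=> u; rewrite (Hu g1) // (Hu g2) //.
Qed.


Section Sep.
Variables (k : fieldType) (P Q : algType k).
Variables (j : Q -> P) (EP : P -> Q) (S : P -> Prop).
Variables (n : nat) (r s : 'I_n -> P) (lam : k).
Hypothesis Hlam : lam != 0.
Hypothesis Hjadd : forall a b, j (a + b) = j a + j b.
Hypothesis Hjmul : forall a b, j (a * b) = j a * j b.
Hypothesis Hjsc : forall c : k, j (c%:A) = c%:A.
Hypothesis HEadd : forall u v, EP (u + v) = EP u + EP v.
Hypothesis HEl : forall q z, EP (j q * z) = q * EP z.
Hypothesis HEr : forall q z, EP (z * j q) = EP z * q.
Hypothesis Hdb1 : forall z, z = \sum_(i < n) r i * j (EP (s i * z)).
Hypothesis Hdb2 : forall z, z = \sum_(i < n) j (EP (z * r i)) * s i.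
Hypothesis Hrs : \sum_(i < n) r i * s i = lam^-1%:A.
Hypothesis HSj : forall w, S w -> exists q, w = j q.
Hypothesis Hirr : forall q, (forall q', S (j q') -> q * q' = q' * q) -> scalars q.
Hypothesis Hd2 : free_right_basis_in j (centralizer S).

Let D := centralizer S.
Lemma cent0 : D 0. Proof. by move=> z _; rewrite mul0r mulr0. Qed.
Lemma centD a b : D a -> D b -> D (a + b).
Proof. by move=> Ha Hb z Sz; rewrite mulrDl mulrDr Ha // Hb. Qed.
Lemma centM a b : D a -> D b -> D (a * b).
Proof. by move=> Ha Hb z Sz; rewrite -mulrA Hb // mulrA Ha // mulrA. Qed.
Lemma centZ c a : D a -> D (c *: a).
Proof. by move=> Ha z Sz; rewrite -scalerAl Ha // scalerAr. Qed.
Lemma centA (c : k) : D c%:A.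
Proof. by move=> z Sz; rewrite mulr_algl mulr_algr. Qed.
Lemma centN a : D a -> D (- a).
Proof. by move=> Ha z Sz; rewrite mulNr mulrN Ha. Qed.
Lemma centB a b : D a -> D b -> D (a - b).
Proof. by move=> Ha Hb; apply: centD => //; apply: centN. Qed.
Lemma centS (I : Type) (rr : seq I) (PP : pred I) (F : I -> P) :
  (forall i, D (F i)) -> D (\sum_(i <- rr | PP i) F i).
Proof.
move=> HF; apply: (big_ind (fun a => D a)) => //; [exact: cent0 | exact: centD].
Qed.

Lemma j0 : j 0 = 0. Proof. exact: add0f. Qed.
Lemma jB a b : j (a - b) = j a - j b. Proof. exact: addBf. Qed.
Lemma jone_s : j 1 = 1.
Proof. by have := Hjsc 1; rewrite !scale1r. Qed.
Lemma EPZ c z : EP (c *: z) = c *: EP z.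
Proof. by rewrite -mulr_algl -Hjsc HEl mulr_algl. Qed.
Lemma EPB a b : EP (a - b) = EP a - EP b. Proof. exact: addBf. Qed.
Lemma EPsum (I : Type) (rr : seq I) (PP : pred I) (F : I -> P) :
  EP (\sum_(i <- rr | PP i) F i) = \sum_(i <- rr | PP i) EP (F i).
Proof. exact: sumf. Qed.
Lemma jsum (I : Type) (rr : seq I) (PP : pred I) (F : I -> Q) :
  j (\sum_(i <- rr | PP i) F i) = \sum_(i <- rr | PP i) j (F i).
Proof. exact: sumf. Qed.

Lemma sep : separable_sub D.
Proof.
case: Hd2 => m [b [Hb Hspan Hfree]].
pose c z := proj1_sig (constructive_indefinite_description _ (Hspan z)).
have Hc z : z = \sum_(l < m) b l * j (c z l).
  by rewrite /c; case: (constructive_indefinite_description _ _).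
have Hcu z (d : 'I_m -> Q) : z = \sum_(l < m) b l * j (d l) -> forall l, c z l = d l.
  move=> Hz l; apply/eqP; rewrite -subr_eq0; apply/eqP; move: l; apply: (Hfree (fun l => c z l - d l)).
  under eq_bigr => l _ do rewrite jB mulrBr.
  by rewrite sumrB -Hc -Hz subrr.
have cadd z z' l : c (z + z') l = c z l + c z' l.
  apply: (Hcu _ (fun l => c z l + c z' l)); under eq_bigr => i _ do rewrite Hjadd mulrDr.
  by rewrite big_split /= -!Hc.
have csum (I : Type) (rr : seq I) (PP : pred I) (F : I -> P) l :
    c (\sum_(i <- rr | PP i) F i) l = \sum_(i <- rr | PP i) c (F i) l.
  exact: (sumf (f := fun z => c z l)).
have cr z q l : c (z * j q) l = c z l * q.
  apply: (Hcu _ (fun l => c z l * q)); under eq_bigr => i _ do rewrite Hjmul mulrA.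
  by rewrite -mulr_suml -Hc.
have cl z q l : S (j q) -> c (j q * z) l = q * c z l.
  move=> Sq; apply: (Hcu _ (fun l => q * c z l)); under eq_bigr => i _ do rewrite Hjmul mulrA Hb // -mulrA.
  by rewrite -mulr_sumr -Hc.
pose w l := \sum_(i < n) j (c (r i) l) * s i.
have HEw z l : EP (w l * z) = c z l.
  rewrite {2}(Hdb1 z) csum /w mulr_suml EPsum; apply: eq_bigr => i _.
  by rewrite -mulrA HEl cr.
have Dw l : D (w l).
  move=> s0 Ss0; have [q Hq] := HSj Ss0; subst s0.
  rewrite /w mulr_sumr.
  under [RHS]eq_bigr => i _ do rewrite mulrA -Hjmul -cl // (Hdb1 (j q * r i)) csum jsum mulr_suml.
  rewrite exchange_big /= mulr_suml; apply: eq_bigr => i _.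
  under eq_bigr => i0 _ do rewrite cr Hjmul -mulrA.
  rewrite -mulr_sumr -mulrA; congr (_ * _).
  by under eq_bigr => i0 _ do rewrite mulrA; rewrite -Hdb2.
have EPsc u : D u -> scalars (EP u).
  move=> Du; apply: Hirr => q' Sq'.
  by rewrite -HEr Du // HEl.
pose phi u := epsilon (inhabits 0) (fun a : k => EP u = a%:A).
have Hphi u : D u -> EP u = (phi u)%:A.
  by move=> Du; rewrite /phi; apply: (epsilon_spec (inhabits 0) (fun a : k => EP u = a%:A)); apply: EPsc.
have Id1 y : D y -> y = \sum_(l < m) phi (w l * y) *: b l.
  move=> Dy; rewrite {1}(Hc y); apply: eq_bigr => l _.
  by rewrite -HEw Hphi ?Hjsc ?mulr_algr //; apply: centM.
have Hdelta l l' : EP (w l * b l') = (l == l')%:R.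
  rewrite HEw; apply: (Hcu _ (fun i => (i == l')%:R)).
  rewrite (bigD1 l') //= eqxx jone_s mulr1 big1 ?addr0 // => i Hi.
  by rewrite (negbTE Hi) j0 mulr0.
have Id2 y : D y -> y = \sum_(l < m) phi (y * b l) *: w l.
  move=> Dy; apply/eqP; rewrite -subr_eq0; apply/eqP.
  set d := y - _.
  have Dd : D d by apply: centB => //; apply: centS => l; apply: centZ.
  have Hd z : EP (d * z) = 0.
    rewrite (Hc z) mulr_sumr EPsum big1 // => l' _.
    rewrite mulrA HEr /d mulrBl EPB mulr_suml EPsum.
    under eq_bigr => l _ do rewrite -scalerAl EPZ Hdelta.
    rewrite (bigD1 l') //= eqxx big1 ?addr0.
      by rewrite Hphi /= ?mulr1n ?subrr ?mul0r //; apply: centM => //; apply: Hb.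
    by move=> i Hi; rewrite (negbTE Hi) scaler0.
  rewrite (Hdb2 d) big1 // => i _.
  by rewrite Hd j0 mul0r.
have Hsum_bw : \sum_(l < m) b l * w l = lam^-1%:A.
  rewrite -Hrs; under eq_bigr => l _ do rewrite /w mulr_sumr.
  rewrite exchange_big /=; apply: eq_bigr => i _.
  by under eq_bigr => l _ do rewrite mulrA; rewrite -mulr_suml -Hc.
move=> T t Ht.
have [[t1 t2 t3] _] := Ht.
have tsumL (I : Type) (rr : seq I) (PP : pred I) (F : I -> P) y :
    (forall i, D (F i)) -> D y ->
    t (\sum_(i <- rr | PP i) F i) y = \sum_(i <- rr | PP i) t (F i) y.
  move=> HF Dy; apply: (sum_dom (D := D) (f := fun a => t a y)) => //.
  - exact: cent0.
  - exact: centD.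
  - by move=> a a' Da Da'; apply: t1.
have tsumR (I : Type) (rr : seq I) (PP : pred I) (F : I -> P) y :
    (forall i, D (F i)) -> D y ->
    t y (\sum_(i <- rr | PP i) F i) = \sum_(i <- rr | PP i) t y (F i).
  move=> HF Dy; apply: (sum_dom (D := D) (f := fun a => t y a)) => //.
  - exact: cent0.
  - exact: centD.
  - by move=> a a' Da Da'; apply: t2.
have Db l : D (b l) by apply: Hb.
have key u a : D u -> D a ->
    \sum_(l < m) t (u * a * b l) (w l) = \sum_(l < m) t (u * b l) (w l * a).
  move=> Du Da.
  have step l : t (u * a * b l) (w l) =
      \sum_(i < m) t (u * b i) (phi (w i * (a * b l)) *: w l).
    rewrite -mulrA {1}(Id1 (a * b l)); last by apply: centM.
    rewrite mulr_sumr tsumL; last first.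
    - exact: Dw.
    - by move=> i; apply: centM => //; apply: centZ.
    apply: eq_bigr => i _.
    rewrite -scalerAr -mulr_algr (t3 (u * b i)) ?mulr_algl //.
    - exact: centM.
    - by exists (phi (w i * (a * b l))).
  under eq_bigr => l _ do rewrite step.
  rewrite exchange_big /=; apply: eq_bigr => l _.
  rewrite -tsumR; last by apply: centM.
    rewrite [in RHS](Id2 (w l * a)); last by apply: centM.
    by congr (t _ _); apply: eq_bigr => i _; rewrite mulrA.
  by move=> i; apply: centZ.
have Dsb d l : D d -> D (lam *: (d * b l)).
  by move=> Dd; apply: centZ; apply: centM.
pose sigma d := \sum_(l < m) t (lam *: (d * b l)) (w l).
exists sigma; split.
- move=> d d' Dd Dd'; rewrite /sigma -big_split /=; apply: eq_bigr => l _.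
  by rewrite mulrDl scalerDr t1 //; apply: centZ; apply: centM.
- move=> a d L Da Dd HL HLt; rewrite /sigma (sumf HL); apply: eq_bigr => l _.
  rewrite HLt; last by [].
    by rewrite -scalerAr mulrA.
  by apply: centZ; apply: centM => //; apply: Db.
- move=> a d L Da Dd HL HLt; rewrite /sigma (sumf HL).
  have -> : \sum_(l < m) L (t (lam *: (d * b l)) (w l)) =
            \sum_(l < m) t ((lam *: d) * b l) (w l * a).
    apply: eq_bigr => l _.
    by rewrite (HLt _ _ (Dsb d l Dd) (Dw l)) scalerAl.
  rewrite -key //; last by apply: centZ.
  by apply: eq_bigr => l _; rewrite -!scalerAl.
- move=> mu Hmu Hmut d Dd; rewrite /sigma (sumf Hmu).
  have -> : \sum_(l < m) mu (t (lam *: (d * b l)) (w l)) =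
            \sum_(l < m) lam *: (d * (b l * w l)).
    apply: eq_bigr => l _.
    by rewrite (Hmut _ _ (Dsb d l Dd) (Dw l)) -scalerAl -mulrA.
  rewrite -scaler_sumr -mulr_sumr Hsum_bw mulr_algr scalerA mulfV //.
  by rewrite scale1r.
Qed.
End Sep.


Section BC.
Variables (k : fieldType) (R R1 : algType k) (S0 : R -> Prop) (ES : R -> R).
Variables (n : nat) (x y : 'I_n -> R) (lam : k) (t : R -> R -> R1) (ER : R1 -> R).
Hypothesis Hlam : lam != 0.
Hypothesis HS0sc : forall c : k, S0 (c%:A).
Hypothesis HESS : forall m, S0 (ES m).
Hypothesis HESbim : forall a m b, S0 a -> S0 b -> ES (a * m * b) = a * ES m * b.
Hypothesis HESx : forall m, \sum_(i < n) ES (m * x i) * y i = m.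
Hypothesis HxES : forall m, \sum_(i < n) x i * ES (y i * m) = m.
Hypothesis HES1 : ES 1 = 1.
Hypothesis Ht : is_tensor (fun _ => True) S0 t.
Hypothesis Htsc : forall (c : k) a b, t (c *: a) b = c *: t a b.
Hypothesis Htmul : forall a b c d, t a b * t c d = t (a * ES (b * c)) d.
Hypothesis Htone : 1 = \sum_(i < n) t (x i) (y i).
Hypothesis HERadd : forall u v, ER (u + v) = ER u + ER v.
Hypothesis HERt : forall a b, ER (t a b) = lam *: (a * b).

Local Notation j := (bc_incl t x y).
Local Notation r := (fun i => lam^-1 *: t (x i) 1).
Local Notation s := (fun i => t 1 (y i)).

Lemma tD1 a a' b : t (a + a') b = t a b + t a' b.
Proof. by case: Ht => [[h1 _ _] _]; apply: h1. Qed.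
Lemma tD2 a b b' : t a (b + b') = t a b + t a b'.
Proof. by case: Ht => [[_ h2 _] _]; apply: h2. Qed.
Lemma tbal a s0 b : S0 s0 -> t (a * s0) b = t a (s0 * b).
Proof. by case: Ht => [[_ _ h3] _] Hs; apply: h3. Qed.
Lemma tsumL (I : Type) (rr : seq I) (PP : pred I) (F : I -> R) b :
  t (\sum_(i <- rr | PP i) F i) b = \sum_(i <- rr | PP i) t (F i) b.
Proof. exact: (sumf (f := fun a => t a b) (fun u v => tD1 u v b)). Qed.
Lemma tsumR (I : Type) (rr : seq I) (PP : pred I) (F : I -> R) a :
  t a (\sum_(i <- rr | PP i) F i) = \sum_(i <- rr | PP i) t a (F i).
Proof. exact: (sumf (f := fun b => t a b) (fun u v => tD2 a u v)). Qed.
Lemma tZ2 c a b : t a (c *: b) = c *: t a b.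
Proof. by rewrite -mulr_algl -tbal // mulr_algr Htsc. Qed.

Lemma ext (V : zmodType) (g1 g2 : R1 -> V) :
  (forall u v, g1 (u + v) = g1 u + g1 v) ->
  (forall u v, g2 (u + v) = g2 u + g2 v) ->
  (forall a b, g1 (t a b) = g2 (t a b)) -> forall z, g1 z = g2 z.
Proof. by move=> H1 H2 H z; apply: (tensor_ext Ht H1 H2) => a b _ _; apply: H. Qed.
Arguments ext [V] g1 g2.

Lemma jD a b : j (a + b) = j a + j b.
Proof. by rewrite /bc_incl -big_split; apply: eq_bigr => i _; rewrite mulrDl tD1. Qed.
Lemma jZ c a : j (c *: a) = c *: j a.
Proof. by rewrite /bc_incl scaler_sumr; apply: eq_bigr => i _; rewrite -scalerAl Htsc. Qed.
Lemma jone : j 1 = 1.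
Proof. by rewrite Htone /bc_incl; apply: eq_bigr => i _; rewrite mul1r. Qed.
Lemma jA c : j (c%:A) = c%:A.
Proof. by rewrite jZ jone. Qed.
Lemma jt m a b : j m * t a b = t (m * a) b.
Proof.
rewrite /bc_incl mulr_suml.
under eq_bigr => i _ do rewrite Htmul -mulrA.
by rewrite -tsumL -mulr_sumr HxES.
Qed.
Lemma tj a b m : t a b * j m = t a (b * m).
Proof.
rewrite /bc_incl mulr_sumr.
under eq_bigr => i _ do rewrite Htmul tbal // mulrA.
by rewrite -tsumR HESx.
Qed.
Lemma jM a b : j (a * b) = j a * j b.
Proof.
rewrite {3}/bc_incl mulr_sumr.
by under eq_bigr => i _ do rewrite jt mulrA.
Qed.

Lemma ERl q z : ER (j q * z) = q * ER z.
Proof.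
apply: (ext (fun z => ER (j q * z)) (fun z => q * ER z)) => [u v|u v|a b].
- by rewrite mulrDr HERadd.
- by rewrite HERadd mulrDr.
- by rewrite jt !HERt -scalerAr mulrA.
Qed.
Lemma ERr q z : ER (z * j q) = ER z * q.
Proof.
apply: (ext (fun z => ER (z * j q)) (fun z => ER z * q)) => [u v|u v|a b].
- by rewrite mulrDl HERadd.
- by rewrite HERadd mulrDl.
- by rewrite tj !HERt -scalerAl mulrA.
Qed.
Lemma ERZ c z : ER (c *: z) = c *: ER z.
Proof. by rewrite -mulr_algl -jA ERl mulr_algl. Qed.

Lemma rj i m : r i * j m = lam^-1 *: t (x i) m.
Proof. by rewrite -scalerAl tj mul1r. Qed.

Lemma db1 z : z = \sum_(i < n) r i * j (ER (s i * z)).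
Proof.
symmetry.
apply: (ext (fun z => \sum_(i < n) r i * j (ER (s i * z))) id) => [u v|//|a b] /=.
- by rewrite -big_split; apply: eq_bigr => i _; rewrite mulrDr HERadd jD mulrDr.
- under eq_bigr => i _ do rewrite rj Htmul mul1r HERt tZ2 scalerA mulVf // scale1r -tbal //.
  by rewrite -tsumL HxES.
Qed.

Lemma db2 z : z = \sum_(i < n) j (ER (z * r i)) * s i.
Proof.
symmetry.
apply: (ext (fun z => \sum_(i < n) j (ER (z * r i)) * s i) id) => [u v|//|a b] /=.
- by rewrite -big_split; apply: eq_bigr => i _; rewrite mulrDl HERadd jD mulrDl.
- under eq_bigr => i _ do rewrite -scalerAr Htmul ERZ HERt mulr1 scalerA mulVf // scale1r jt mulr1 tbal //.
  by rewrite -tsumR HESx.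
Qed.

Lemma rs : \sum_(i < n) r i * s i = lam^-1%:A.
Proof.
under eq_bigr => i _ do rewrite -scalerAl Htmul mul1r HES1 mulr1.
by rewrite -scaler_sumr -Htone.
Qed.

Lemma irr2 : (forall q, centralizer S0 q -> scalars q) ->
  forall z, (forall q, z * j q = j q * z) -> scalars z.
Proof.
move=> Hirr0 z Hz.
pose mi i := ER (s i * z).
have Ez : z = \sum_(i < n) lam^-1 *: t (x i) (mi i).
  by rewrite {1}(db1 z); apply: eq_bigr => i _; rewrite rj.
pose Q m := \sum_(i < n) lam^-1 *: (x i * ES (mi i * m)).
have Hq m : z * t m 1 = t (Q m) 1.
  rewrite {1}Ez mulr_suml tsumL; apply: eq_bigr => i _.
  by rewrite -scalerAl Htmul Htsc.
have tinj a b : t a 1 = t b 1 -> a = b.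
  move/(congr1 ER); rewrite !HERt !mulr1; exact: scalerI.
have jm1 m : j m * t 1 1 = t m 1 by rewrite jt mulr1.
have Qm m : Q m = m * Q 1.
  apply: tinj; rewrite -(Hq m) -(jm1 m) mulrA Hz -mulrA (Hq 1) jt //.
have QmN m s0 : S0 s0 -> Q (m * s0) = Q m * s0.
  move=> Hs0; apply: tinj.
  rewrite -(Hq (m * s0)) (tbal m 1 Hs0) mulr1.
  have -> : t m s0 = t m 1 * j s0 by rewrite tj mul1r.
  by rewrite mulrA (Hq m) tj mul1r (tbal (Q m) 1 Hs0) mulr1.
have cQ : centralizer S0 (Q 1).
  move=> s0 Hs0; have := QmN 1 s0 Hs0; rewrite mul1r (Qm s0) => ->; done.
have [c Hc] := Hirr0 _ cQ.
exists c.
have -> : z = z * \sum_(i < n) t (x i) (y i) by rewrite -Htone mulr1.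
have Hsplit i : t (x i) (y i) = t (x i) 1 * t 1 (y i) by rewrite Htmul mul1r HES1 mulr1.
rewrite mulr_sumr.
under eq_bigr => i _ do rewrite Hsplit mulrA Hq Qm Hc mulr_algr Htsc -scalerAl -Hsplit.
by rewrite -scaler_sumr -Htone.
Qed.

Lemma bc_all :
  (forall a b, j (a + b) = j a + j b) /\
  (forall a b, j (a * b) = j a * j b) /\
  (forall c : k, j (c%:A) = c%:A) /\
  (forall q z, ER (j q * z) = q * ER z) /\
  (forall q z, ER (z * j q) = ER z * q) /\
  (forall z, z = \sum_(i < n) r i * j (ER (s i * z))) /\
  (forall z, z = \sum_(i < n) j (ER (z * r i)) * s i) /\
  (\sum_(i < n) r i * s i = lam^-1%:A) /\
  ((forall q, centralizer S0 q -> scalars q) ->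
    forall z, (forall q, z * j q = j q * z) -> scalars z).
Proof using All.
split; first exact: jD.
split; first exact: jM.
split; first exact: jA.
split; first exact: ERl.
split; first exact: ERr.
split; first exact: db1.
split; first exact: db2.
split; first exact: rs.
exact: irr2.
Qed.
End BC.

Unset Implicit Arguments. Set Strict Implicit.


Theorem proposition3p2
  (k : fieldType) (M : algType k) (N : M -> Prop)
  (* N is a k-subalgebra of M *)
  (HN1 : N 1)
  (HNadd : forall a b, N a -> N b -> N (a + b))
  (HNopp : forall a, N a -> N (- a))
  (HNmul : forall a b, N a -> N b -> N (a * b))
  (HNscale : forall (c : k) a, N a -> N (c *: a))
  (* irreducible: C_M(N) = k 1 *)
  (Hirr : forall m, centralizer N m <-> scalars m)
  (* strongly separable: E, x_i, y_i *)
  (E : M -> M)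
  (HEN : forall m, N (E m))
  (HEadd : forall a b, E (a + b) = E a + E b)
  (HEbimod : forall a m b, N a -> N b -> E (a * m * b) = a * E m * b)
  (n : nat) (x y : 'I_n -> M)
  (HEx : forall m, \sum_(i < n) E (m * x i) * y i = m)
  (HxE : forall m, \sum_(i < n) x i * E (y i * m) = m)
  (HE1 : E 1 = 1)
  (lam : k) (Hlam : lam != 0)
  (Hxy : \sum_(i < n) x i * y i = lam^-1%:A)
  (* first basic construction M1 = M (x)_N M *)
  (M1 : algType k) (t1 : M -> M -> M1)
  (Ht1 : is_tensor (fun _ => True) N t1)
  (Ht1scale : forall (c : k) a b, t1 (c *: a) b = c *: t1 a b)
  (Ht1mul : forall a b c d, t1 a b * t1 c d = t1 (a * E (b * c)) d)
  (Ht1one : 1 = \sum_(i < n) t1 (x i) (y i))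
  (EM : M1 -> M)
  (HEMadd : forall u v, EM (u + v) = EM u + EM v)
  (HEMt : forall a b, EM (t1 a b) = lam *: (a * b))
  (* second basic construction M2 = M1 (x)_M M1, with the data
     lam^-1 x_i (x) 1 and 1 (x) y_i *)
  (M2 : algType k) (t2 : M1 -> M1 -> M2)
  (Ht2 : is_tensor (fun _ => True)
           (fun z => exists m, z = bc_incl t1 x y m) t2)
  (Ht2scale : forall (c : k) a b, t2 (c *: a) b = c *: t2 a b)
  (Ht2mul : forall a b c d,
     t2 a b * t2 c d = t2 (a * bc_incl t1 x y (EM (b * c))) d)
  (Ht2one : 1 = \sum_(i < n) t2 (lam^-1 *: t1 (x i) 1) (t1 1 (y i)))
  (* depth 2 *)
  (Hd2a : free_right_basis_in (bc_incl t1 x y)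
            (centralizer (fun z => exists m, N m /\ z = bc_incl t1 x y m)))
  (Hd2b : free_right_basis_in
            (bc_incl t2 (fun i => lam^-1 *: t1 (x i) 1) (fun i => t1 1 (y i)))
            (centralizer (fun w => exists m, w =
               bc_incl t2 (fun i => lam^-1 *: t1 (x i) 1) (fun i => t1 1 (y i))
                 (bc_incl t1 x y m)))) :
  separable_sub (centralizer (fun z => exists m, N m /\ z = bc_incl t1 x y m))
  /\ separable_sub (centralizer (fun w => exists m, w =
       bc_incl t2 (fun i => lam^-1 *: t1 (x i) 1) (fun i => t1 1 (y i))
         (bc_incl t1 x y m))).
  (* your proof *)
Proof.
have HNsc : forall c : k, N (c%:A) by move=> c; apply: HNscale.
have [j1D [j1M [j1A [EMl [EMr [db1_1 [db2_1 [rs1 irr1]]]]]]]] :=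
  bc_all Hlam HNsc HEN HEbimod HEx HxE HE1 Ht1 Ht1scale Ht1mul Ht1one HEMadd HEMt.
set j1 := bc_incl t1 x y in j1D j1M j1A EMl EMr db1_1 db2_1 irr1 Hd2a Hd2b Ht2 Ht2mul *.
set r1 := (fun i => lam^-1 *: t1 (x i) 1) in db1_1 db2_1 rs1 Hd2b Ht2one *.
set s1 := (fun i => t1 1 (y i)) in db1_1 db2_1 rs1 Hd2b Ht2one *.
have [_ HU2] := Ht2.
have Hbal : balanced_biadd (fun _ => True) (fun z => exists m, z = j1 m)
    (fun a b : M1 => lam *: (a * b)).
  split.
  - by move=> a a' b _ _ _; rewrite mulrDl scalerDr.
  - by move=> a b b' _ _ _; rewrite mulrDr scalerDr.
  - by move=> a s b _ _ _; rewrite mulrA.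
have [EM1 [HEM1add HEM1t' _]] := HU2 _ _ Hbal.
have HEM1t a b : EM1 (t2 a b) = lam *: (a * b) by apply: HEM1t'.
have EMone : EM 1 = 1.
  rewrite Ht1one (sumf HEMadd).
  under eq_bigr => i _ do rewrite HEMt.
  by rewrite -scaler_sumr Hxy scalerA mulfV // scale1r.
have j1one : j1 1 = 1 by have := j1A 1; rewrite !scale1r.
have HS0sc : forall c : k, exists m, c%:A = j1 m by move=> c; exists c%:A; rewrite j1A.
have HESS : forall m, exists m', j1 (EM m) = j1 m' by move=> m; exists (EM m).
have HESbim : forall a m b, (exists m', a = j1 m') -> (exists m', b = j1 m') ->
    j1 (EM (a * m * b)) = a * j1 (EM m) * b.
  by move=> a m b [a' ->] [b' ->]; rewrite EMr EMl !j1M.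
have HESx : forall m, \sum_(i < n) j1 (EM (m * r1 i)) * s1 i = m by move=> m; rewrite -db2_1.
have HxES : forall m, \sum_(i < n) r1 i * j1 (EM (s1 i * m)) = m by move=> m; rewrite -db1_1.
have HES1 : j1 (EM 1) = 1 by rewrite EMone j1one.
have [j2D [j2M [j2A [EM1l [EM1r [db1_2 [db2_2 [rs2 _]]]]]]]] :=
  bc_all (ES := fun z => j1 (EM z)) Hlam HS0sc HESS HESbim HESx HxES HES1 Ht2 Ht2scale Ht2mul Ht2one HEM1add HEM1t.
have HirrN : forall q, centralizer N q -> scalars q by move=> q; case: (Hirr q).
split.
- apply: (sep Hlam j1D j1M j1A HEMadd EMl EMr db1_1 db2_1 rs1) => //.
  + by move=> w [m [_ ->]]; exists m.
  + move=> q Hq; apply/Hirr => nn Nn; apply: Hq; exists nn; split => //.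
- apply: (sep Hlam j2D j2M j2A HEM1add EM1l EM1r db1_2 db2_2 rs2) => //.
  + by move=> w [m ->]; exists (j1 m).
  + move=> q Hq; apply: (irr1 HirrN) => m; by apply: Hq; exists m.

Qed.
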